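(* Let $m$ be a positive integer divisible by $3$, and for $z\in\{0,1\}$ let $\mathcal G_z$ be the uniform distribution over $\textsc{GapMaj}_m^{-1}(z)$. For every conjunction $C\colon\{0,1\}^m\to\{0,1\}$ of width $w\le m/7$ and each $z\in\{0,1\}$, $C(\mathcal G_z)\le 3^w\cdot C(\mathcal G_{1-z})$.
   Context: $\textsc{GapMaj}_m\colon\{0,1\}^m\to\{0,1\}$ is the partial function with value $0$ on inputs of Hamming weight $m/3$ and value $1$ on inputs of Hamming weight $2m/3$ (undefined otherwise). A conjunction is an AND of literals; its width is its number of literals. For a conjunction $C$ and distribution $\mathcal D$, $C(\mathcal D)=\Pr_{x\sim\mathcal D}[C(x)=1]$. *)

(* Defs.v *)
From mathcomp Require Import all_boot all_order all_algebra.
Set Implicit Arguments. Unset Strict Implicit. Unset Printing Implicit Defensive.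
Import GRing.Theory Num.Theory.

(* Inputs in {0,1}^m are boolean finite functions 'I_m -> bool (true = 1). *)
Definition hw (m : nat) (x : {ffun 'I_m -> bool}) : nat := #|[set i | x i]|.

Definition gapmaj_preimage (m : nat) (z : bool) : {set {ffun 'I_m -> bool}} :=
  [set x | hw x == (if z then (2 * m) %/ 3 else m %/ 3)].

(* A literal is a pair (i, b): it is satisfied by x iff x i = b
   (b = true: the positive literal x_i; b = false: the negated literal ~x_i). *)
Definition conjunction (m : nat) := {set ('I_m * bool)}.
Definition width (m : nat) (C : conjunction m) : nat := #|C|.
Definition conj_eval (m : nat) (C : conjunction m) (x : {ffun 'I_m -> bool}) : bool :=
  [forall l in C, x l.1 == l.2].

Definition unif_prob (m : nat) (C : conjunction m) (S : {set {ffun 'I_m -> bool}}) : rat :=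
  (#|[set x in S | conj_eval C x]|)%:R / (#|S|)%:R.

Definition accept_prob (m : nat) (C : conjunction m) (z : bool) : rat :=
  unif_prob C (gapmaj_preimage m z).

(* Main.v *)
Require Import Defs.
From mathcomp Require Import all_boot all_order all_algebra.
From mathcomp Require Import zify.
Set Implicit Arguments. Unset Strict Implicit.
Import GRing.Theory Num.Theory.
Lemma base k p : p <= k -> 'C(3*k-p, k-p) <= 'C(3*k-p, k).
Proof.
elim: p => [|p IH] hp; first by rewrite !subn0.
have IH' := IH (ltnW hp).
set n := 3*k - p.
have hn : 3*k - p.+1 = n.-1 by rewrite /n; lia.
rewrite hn.
have n0 : 0 < n by rewrite /n; lia.
rewrite -(leq_pmul2l n0).
have e1 : k - p.+1 = (k-p).-1 by lia.
rewrite e1 mul_bin_diag mul_bin_down.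
have -> : (k-p).-1.+1 = k - p by lia.
apply: leq_mul => //; rewrite /n; lia.
Qed.
Lemma L1 k p q : 2*q <= k -> p + q <= k ->
  'C(3*k-p-q, k-p) <= 3^q * 'C(3*k-p-q, k-q).
Proof.
elim: q => [|q IH] h1 h2.
  by rewrite !subn0 mul1n base //; lia.
have IH' := IH ltac:(lia) ltac:(lia).
set n := 3*k - p - q.
have hn : 3*k - p - q.+1 = n.-1 by rewrite /n; lia.
rewrite hn.
have n0 : 0 < n by rewrite /n; lia.
rewrite -(leq_pmul2l n0) mul_bin_down.
have e1 : k - q.+1 = (k-q).-1 by lia.
rewrite e1 mulnCA mul_bin_diag.
have -> : (k-q).-1.+1 = k - q by lia.
have -> : n - (k - p) = 2*k - q by rewrite /n; lia.
rewrite expnS -mulnA mulnCA.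
apply: (leq_trans (leq_mul (leqnn _) IH')).
rewrite mulnCA leq_pmul2l ?expn_gt0 // mulnA /n leq_mul2r; apply/orP; right; lia.
Qed.

Section Count.
Variables (m : nat) (C : conjunction m).
Hypothesis cons : forall i, ~~ (((i,true) \in C) && ((i,false) \in C)).
Let P := [set i | (i,true) \in C].
Let V := [set i | ((i,true) \in C) || ((i,false) \in C)].

Lemma conjE x : conj_eval C x -> forall i b, (i,b) \in C -> x i = b.
Proof. by move=> /forallP H i b iC; have := H (i,b); rewrite iC /= => /eqP. Qed.

Lemma hw_split x : conj_eval C x -> hw x = #|P| + #|[set i in ~:V | x i]|.
Proof.
move=> cx; rewrite /hw -(cardsID V); congr (_ + _); apply: eq_card => i.
  rewrite !inE; have := cons i.
  case tC: ((i,true) \in C); case fC: ((i,false) \in C) => //= _.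
  - by rewrite (conjE cx tC).
  - by rewrite (conjE cx fC).
  - by rewrite andbF.
by rewrite !inE andbC.
Qed.

Lemma card_V : #|V| = #|C|.
Proof.
have -> : V = fst @: C.
  apply/setP => i; rewrite inE; apply/orP/imsetP.
    by case=> H; [exists (i,true) | exists (i,false)].
  case=> [[j b] H /= ->]; by case: b H => H; [left|right].
apply: card_in_imset => [[i b] [j c]] /= H1 H2 eij; subst j.
have := cons i; case: b H1 => H1; case: c H2 => H2 //=; by rewrite H1 H2.
Qed.

Lemma P_sub_V : P \subset V.
Proof. by apply/subsetP => i; rewrite !inE => ->. Qed.

Lemma count K : #|P| <= K ->
  #|[set x | (hw x == K) && conj_eval C x]| = 'C(m - #|C|, K - #|P|).
Proof.
move=> PK.
pose phi (x : {ffun 'I_m -> bool}) := [set i in ~:V | x i].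
rewrite -card_V.
have -> : m - #|V| = #|~: V| by have h := cardsC V; rewrite card_ord in h; lia.
rewrite -cards_draws -(@card_in_imset _ _ phi).
  apply: eq_card => A; rewrite inE; apply/imsetP/andP.
    case=> x; rewrite inE => /andP[/eqP hx cx] ->; split.
      by apply/subsetP => i; rewrite inE => /andP[].
    by rewrite -hx (hw_split cx) addKn.
  case=> AV /eqP cA.
  pose x := [ffun i => if i \in V then i \in P else i \in A].
  have cx : conj_eval C x.
    apply/forallP => [[i b]]; apply/implyP => H; rewrite ffunE /=.
    have -> : i \in V by rewrite inE; case: b H => ->; rewrite ?orbT.
    rewrite inE; case: b H => /= H; first by rewrite H.
    by move: (cons i); rewrite H andbT; case: ((i,true) \in C).
  have px : phi x = A.
    apply/setP => i; rewrite in_set in_setC ffunE.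
    case iV: (i \in V) => /=.
      apply/esym/negbTE; apply/negP => iA; have := subsetP AV i iA.
      by rewrite inE iV.
    by [].
  exists x => //; rewrite inE cx andbT (hw_split cx) -/(phi x) px cA.
  by rewrite subnKC.
move=> x y; rewrite !inE => /andP[_ cx] /andP[_ cy] pe.
apply/ffunP => i.
case tC: ((i,true) \in C); first by rewrite (conjE cx tC) (conjE cy tC).
case fC: ((i,false) \in C); first by rewrite (conjE cx fC) (conjE cy fC).
have : (i \in phi x) = (i \in phi y) by rewrite pe.
by rewrite !inE tC fC /=.
Qed.
End Count.

Local Open Scope ring_scope.

Definition Kz (m : nat) (z : bool) : nat := (if z then (2 * m) %/ 3 else m %/ 3)%N.

Lemma gen (m : nat) (C : conjunction m) (zz : bool) : accept_prob C zz =
   (#|[set x | (Defs.hw x == Kz m zz) && conj_eval C x]|)%:R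
   / (#|[set x | (Defs.hw x == Kz m zz) && conj_eval (set0 : conjunction m) x]|)%:R.
Proof.
  rewrite /accept_prob /unif_prob.
  have c0 : forall x : {ffun 'I_m -> bool}, conj_eval (set0 : conjunction m) x.
    by move=> x; apply/forallP => l; rewrite inE.
  have -> : gapmaj_preimage m zz = [set x | (Defs.hw x == Kz m zz) && conj_eval (set0 : conjunction m) x].
    by apply/setP => x; rewrite !inE c0 andbT.
  congr (_%:R / _); apply: eq_card => x; rewrite !inE c0 andbT //.
Qed.

Theorem fact2p2 (m : nat) (hm0 : (0 < m)%N) (hm3 : (3 %| m)%N)
    (C : conjunction m) (hw : (7 * width C <= m)%N) (z : bool) :
  accept_prob C z <= (3 : rat) ^+ width C * accept_prob C (~~ z).
Proof.
move: hw; rewrite /width => hwC.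
have [cons|incons] := boolP [forall i, ~~ (((i,true) \in C) && ((i,false) \in C))]; last first.
  have e0 : forall zz : bool, accept_prob C zz = 0.
    move=> zz; rewrite gen; move/forallPn: incons => [i]; rewrite negbK => /andP[h1 h2].
    rewrite (_ : #|_| = 0)%N ?mul0r //; apply: eq_card0 => x; rewrite inE.
    apply/negbTE; apply/nandP; right; apply/negP => cx.
    by have := conjE cx h1; rewrite (conjE cx h2).
  by rewrite !e0 mulr0.
move/forallP: cons => cons.
have cons0 : forall i : 'I_m, ~~ (((i,true) \in (set0 : conjunction m)) && ((i,false) \in set0)).
  by move=> i; rewrite inE.
set k := (m %/ 3)%N.
have mk : m = (3 * k)%N by rewrite /k; move: hm3 => /dvdnP [c ->]; rewrite mulnK //; lia.
have e2 : ((2 * m) %/ 3 = 2 * k)%N by rewrite mk mulnCA mulKn.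
set p := #|[set i | (i,true) \in C]|.
have pw : (p <= #|C|)%N by rewrite -(card_V cons); apply: subset_leq_card; apply: P_sub_V.
set w := #|C| in hwC pw *.
have hkw : (7 * w <= 3 * k)%N by rewrite -mk.
have L : forall zz : bool, (#|[set x | (Defs.hw x == Kz m zz) && conj_eval C x]|
     = if zz then 'C(3*k-p-(w-p), k-(w-p)) else 'C(3*k-p-(w-p), k-p))%N.
  move=> zz; rewrite count //; last by case: zz; rewrite /Kz; rewrite ?e2 /k; lia.
  have -> : (m - w = 3*k-p-(w-p))%N by lia.
  case: zz; rewrite /Kz ?e2 //.
  rewrite -bin_sub; last by lia.
  congr 'C(_, _); lia.
have D : forall zz : bool, (#|[set x | (Defs.hw x == Kz m zz) && conj_eval (set0 : conjunction m) x]|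
     = 'C(m, k))%N.
  have P0 : #|[set i | (i, true) \in (set0 : conjunction m)]| = 0%N.
    by apply: eq_card0 => i; rewrite !inE.
  move=> zz; rewrite (count cons0) ?cards0 P0 ?subn0 //; case: zz; rewrite /Kz //.
  rewrite e2 -bin_sub; last by lia.
  congr (binomial _ _); lia.
rewrite !gen !D !L mulrA; apply: ler_wpM2r; first by rewrite invr_ge0 ler0n.
rewrite -natrX -natrM ler_nat.
case: z => /=.
  have := L1 (k := k) (p := w - p) (q := p) ltac:(lia) ltac:(lia).
  have -> : (3 * k - (w - p) - p = 3 * k - p - (w - p))%N by lia.
  move=> h; apply: (leq_trans h); rewrite leq_mul2r leq_pexp2l ?orbT //; lia.
have := L1 (k := k) (p := p) (q := w - p) ltac:(lia) ltac:(lia).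
move=> h; apply: (leq_trans h); rewrite leq_mul2r leq_pexp2l ?orbT //; lia.
Qed.
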